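(* Let $1\le d<N$ and $w\in I_{d,N}$. If $w$ has one of the forms (1) $w=(1,2,\dots,p,p+2,p+3,\dots,d,f)$ for some integers $0\le p<d-1$ and $d<f\le N$, or (2) $w=(1,2,\dots,d-1,f)$ for some integer $d<f\le N$, (equivalently, the reduced sequence $\overline w$ equals $(2,3,\dots,\overline d,\overline N)$ or $(\overline N)$), then the Schubert variety $X(w)$ contains a dense open orbit of the diagonal torus $T\subseteq GL_N$, so $X(w)$ is a toric variety for the torus $T/H$, where $H$ is the stabilizer in $T$ of a point of this orbit.
   Context: Work over $\mathbb{C}$. $G_{d,N}$ is the Grassmannian of $d$-planes in $\mathbb{C}^N$ with its Plücker embedding; $B\subset GL_N$ upper triangular, $T$ the diagonal matrices acting by left multiplication. $I_{d,N}$ is the set of sequences $(i_1<\dots<i_d)$ in $\{1,\dots,N\}$. For $w=(\ell_1,\dots,\ell_d)\in I_{d,N}$, $X(w)$ is the closure of $B\cdot[e_{\ell_1}\wedge\dots\wedge e_{\ell_d}]$ (a normal $T$-stable projective variety). Reduction of $w\ne(1,\dots,d)$: with $p\ge0$ maximal such that $\ell_i=i$ for $i\le p$, $\overline w=(\ell_{p+1}-p,\dots,\ell_d-p)$, $\overline d=d-p$, $\overline N=\ell_d-p$. In form (1) the sequence consists of $1,\dots,p$, then $p+2,\dots,d$, then $f$ (length $d$). *)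

(* Defs.v *)
From HB Require Import structures.
From mathcomp Require Import all_boot all_order all_algebra all_field.
Set Implicit Arguments. Unset Strict Implicit. Unset Printing Implicit Defensive.
Import GRing.Theory.
Local Open Scope ring_scope.

(* Index set of the Plücker basis: strictly increasing maps 'I_d -> 'I_N,
   i.e. sequences (i_1 < ... < i_d) of I_{d,N}, written 0-based. *)
Definition incrb (d N : nat) (f : {ffun 'I_d -> 'I_N}) : bool :=
  [forall i : 'I_d, forall j : 'I_d, (i < j)%N ==> (f i < f j)%N].

Definition Idx (d N : nat) := {f : {ffun 'I_d -> 'I_N} | incrb f}.

Definition subm (F : fieldType) (N d : nat) (g : 'M[F]_N) (s r : Idx d N)
  : 'M[F]_d := \matrix_(i < d, j < d) g (val s i) (val r j).

(* Action of g in GL_N on /\^d F^N in the Plücker basis e_{r_1}/\.../\e_{r_d}: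
   (g.x)_s = sum_r det(g_{s,r}) x_r. *)
Definition wedge_act (F : fieldType) (N d : nat) (g : 'M[F]_N)
  (x : Idx d N -> F) : Idx d N -> F :=
  fun s => \sum_(r : Idx d N) \det (subm g s r) * x r.

Definition ebasis (F : fieldType) (d N : nat) (w : Idx d N) : Idx d N -> F :=
  fun s => if s == w then 1 else 0.

(* A polynomial in variables indexed by the finite type K: a finite list of
   terms (coefficient, exponent vector). *)
Definition mpoly (F : fieldType) (K : finType) := seq (F * {ffun K -> nat}).

Definition meval (F : fieldType) (K : finType) (p : mpoly F K) (x : K -> F) : F :=
  \sum_(t <- p) t.1 * \prod_(k : K) x k ^+ t.2 k.

Definition homog (F : fieldType) (K : finType) (p : mpoly F K) : Prop :=
  exists e : nat, forall t, t \in p -> (\sum_(k : K) t.2 k)%N = e.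

(* Points of P(F^K) are represented by their (nonzero) cones: subsets of
   F^K \ {0} stable under nonzero scaling. *)
Definition nonzero (F : fieldType) (K : finType) (x : K -> F) : Prop :=
  exists k, x k != 0.

Definition pzero (F : fieldType) (K : finType) (P : mpoly F K -> Prop)
  (x : K -> F) : Prop :=
  nonzero x /\ forall p, P p -> meval p x = 0.

Definition pclosure (F : fieldType) (K : finType) (S : (K -> F) -> Prop)
  (x : K -> F) : Prop :=
  nonzero x /\
  forall p : mpoly F K, homog p -> (forall y, S y -> meval p y = 0) -> meval p x = 0.

Definition open_in (F : fieldType) (K : finType) (X U : (K -> F) -> Prop) : Prop :=
  exists P : mpoly F K -> Prop, (forall p, P p -> homog p) /\
    forall y, U y <-> (X y /\ ~ pzero P y).

Definition dense_in (F : fieldType) (K : finType) (X U : (K -> F) -> Prop) : Prop :=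
  forall y, X y -> pclosure U y.

Definition upper_tri (F : fieldType) (N : nat) (g : 'M[F]_N) : Prop :=
  forall i j : 'I_N, (j < i)%N -> g i j = 0.

(* Cone over the orbit B.[e_w] in P(/\^d F^N). *)
Definition Borbit (F : fieldType) (d N : nat) (w : Idx d N) (y : Idx d N -> F) : Prop :=
  exists (g : 'M[F]_N) (c : F), [/\ upper_tri g, g \in unitmx, c != 0 &
    forall s, y s = c * wedge_act g (ebasis F w) s].

Definition Schubert (F : fieldType) (d N : nat) (w : Idx d N) :=
  pclosure (Borbit (F := F) w).

Definition Torbit (F : fieldType) (d N : nat) (x : Idx d N -> F) (y : Idx d N -> F) : Prop :=
  exists (t : 'I_N -> F) (c : F), [/\ forall i, t i != 0, c != 0 &
    forall s, y s = c * wedge_act (diag_mx (\row_i t i)) x s].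

(* Main.v *)
Require Import Defs.
From HB Require Import structures.
From mathcomp Require Import all_boot all_order all_algebra all_field.
From mathcomp Require Import perm zify ring.
From Stdlib Require Import FunctionalExtensionality.
Set Implicit Arguments. Unset Strict Implicit. Unset Printing Implicit Defensive.
Import GRing.Theory.
Local Open Scope ring_scope.

Section PolyFun.
Variable F : fieldType.
Hypothesis charF0 : [pchar F] =i pred0.
Variable V : finType.

Inductive pf : ((V -> F) -> F) -> Prop :=
| pfC (c : F) : pf (fun _ => c)
| pfX (v : V) : pf (fun z => z v)
| pfD f g : pf f -> pf g -> pf (fun z => f z + g z)
| pfM f g : pf f -> pf g -> pf (fun z => f z * g z)
| pfE f g : (forall z, f z = g z) -> pf f -> pf g.

Lemma pf_line f : pf f -> forall z1 z2 : V -> F, exists P : {poly F},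
  forall l, f (fun v => z1 v + l * (z2 v - z1 v)) = P.[l].
Proof.
elim=> {f}.
- by move=> c z1 z2; exists c%:P => l; rewrite hornerC.
- move=> v z1 z2; exists ((z1 v)%:P + 'X * (z2 v - z1 v)%:P) => l.
  by rewrite !hornerE.
- move=> f g _ IHf _ IHg z1 z2; have [P HP] := IHf z1 z2; have [Q HQ] := IHg z1 z2.
  by exists (P + Q) => l; rewrite hornerD HP HQ.
- move=> f g _ IHf _ IHg z1 z2; have [P HP] := IHf z1 z2; have [Q HQ] := IHg z1 z2.
  by exists (P * Q) => l; rewrite hornerM HP HQ.
- move=> f g Hfg _ IH z1 z2; have [P HP] := IH z1 z2.
  by exists P => l; rewrite -HP Hfg.
Qed.

Lemma natr_injF (m n : nat) : (m%:R : F) = n%:R -> m = n.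
Proof.
have H0 k : (k%:R : F) = 0 -> k = 0%N.
  by move=> Hk; apply/eqP; rewrite -((pcharf0P _).1 charF0 k) Hk.
wlog le: m n / (m <= n)%N.
  move=> W E; case: (leqP m n) => h; first exact: W.
  by symmetry; apply: W; [exact: ltnW|].
have [k ->] : exists k, n = (m + k)%N by exists (n - m)%N; lia.
move=> E.
rewrite natrD in E; have: (k%:R : F) = 0.
  by apply: (addrI (m%:R)); rewrite -E addr0.
by move/H0 => ->; rewrite addn0.
Qed.

Lemma poly_nonroot (P : {poly F}) : P != 0 -> exists l, P.[l] != 0.
Proof.
move=> HP; set rs := [seq (i%:R : F) | i <- iota 0 (size P)].
have : has (fun x => ~~ root P x) rs.
  apply/negPn/negP; rewrite -all_predC => Hall.
  have Hu : uniq rs by rewrite map_inj_uniq ?iota_uniq //; exact: natr_injF.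
  have Hall' : all (root P) rs by apply/allP => x /(allP Hall) /= /negPn.
  by have := max_poly_roots HP Hall' Hu; rewrite size_map size_iota ltnn.
by case/hasP => x _ /= Hx; exists x.
Qed.

Lemma pf_mul_nz f g : pf f -> pf g -> (exists z, f z != 0) -> (exists z, g z != 0) ->
  exists z, f z * g z != 0.
Proof.
move=> pff pfg [z1 H1] [z2 H2].
have [P HP] := pf_line pff z1 z2; have [Q HQ] := pf_line pfg z1 z2.
have eqz1 : (fun v => z1 v + 0 * (z2 v - z1 v)) = z1.
  by apply: functional_extensionality => v; rewrite mul0r addr0.
have eqz2 : (fun v => z1 v + 1 * (z2 v - z1 v)) = z2.
  by apply: functional_extensionality => v; rewrite mul1r addrC subrK.
have P0 : P != 0 by apply: contra H1 => /eqP P0; rewrite -eqz1 HP P0 horner0.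
have Q0 : Q != 0 by apply: contra H2 => /eqP Q0; rewrite -eqz2 HQ Q0 horner0.
have [l Hl] := poly_nonroot (mulf_neq0 P0 Q0).
by exists (fun v => z1 v + l * (z2 v - z1 v)); rewrite HP HQ -hornerM.
Qed.

Lemma pf_sum (I : Type) (r : seq I) (Fi : I -> (V -> F) -> F) :
  (forall i, pf (Fi i)) -> pf (fun z => \sum_(i <- r) Fi i z).
Proof.
move=> H; elim: r => [|i r IH].
  by apply: (pfE (f := fun _ => 0)) => [z|]; [rewrite big_nil|exact: pfC].
apply: (pfE (f := fun z => Fi i z + \sum_(j <- r) Fi j z)) => [z|].
  by rewrite big_cons.
exact: pfD.
Qed.

Lemma pf_prod (I : Type) (r : seq I) (Fi : I -> (V -> F) -> F) :
  (forall i, pf (Fi i)) -> pf (fun z => \prod_(i <- r) Fi i z).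
Proof.
move=> H; elim: r => [|i r IH].
  by apply: (pfE (f := fun _ => 1)) => [z|]; [rewrite big_nil|exact: pfC].
apply: (pfE (f := fun z => Fi i z * \prod_(j <- r) Fi j z)) => [z|].
  by rewrite big_cons.
exact: pfM.
Qed.

Lemma pf_exp f n : pf f -> pf (fun z => f z ^+ n).
Proof.
move=> H; elim: n => [|n IH].
  by apply: (pfE (f := fun _ => 1)) => [z|]; [rewrite expr0|exact: pfC].
apply: (pfE (f := fun z => f z * f z ^+ n)) => [z|]; first by rewrite exprS.
exact: pfM.
Qed.

Lemma pf_prod_nz (I : eqType) (r : seq I) (Fi : I -> (V -> F) -> F) :
  (forall i, pf (Fi i)) -> (forall i, i \in r -> exists z, Fi i z != 0) ->
  exists z, \prod_(i <- r) Fi i z != 0.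
Proof.
move=> H; elim: r => [|i r IH] Hnz.
  by exists (fun _ => 0); rewrite big_nil oner_neq0.
have h1 : exists z, Fi i z != 0 by apply: Hnz; rewrite inE eqxx.
have h2 : exists z, \prod_(j <- r) Fi j z != 0.
  by apply: IH => j Hj; apply: Hnz; rewrite inE Hj orbT.
have [z Hz] := pf_mul_nz (H i) (pf_prod r H) h1 h2.
by exists z; rewrite big_cons.
Qed.

Lemma pf_meval (K : finType) (p : mpoly F K) (Y : (V -> F) -> K -> F) :
  (forall k, pf (fun z => Y z k)) -> pf (fun z => meval p (Y z)).
Proof.
move=> H; rewrite /meval; apply: pf_sum => t.
apply: pfM; first exact: pfC.
apply: pf_prod => k; exact: pf_exp.
Qed.

End PolyFun.


Section DetLemmas.
Variable F : fieldType.

Lemma det_block0 n (A : 'M[F]_n) (k : 'I_n) :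
  (forall i l : 'I_n, (k <= i)%N -> (l <= k)%N -> A i l = 0) -> \det A = 0.
Proof.
move=> H; rewrite /determinant; apply: big1 => s _.
apply/eqP; rewrite mulf_eq0; apply/orP; right.
case: (boolP [exists i : 'I_n, (k <= i)%N && (s i <= k)%N]).
  case/existsP => i /andP [h1 h2]; apply/prodf_eq0; exists i => //.
  by rewrite H.
move=> /existsPn Hn; exfalso.
set A1 := [set i : 'I_n | (k <= i)%N]; set B1 := [set i : 'I_n | (k < i)%N].
have sub : [set s x | x in A1] \subset B1.
  apply/subsetP => y /imsetP [x]; rewrite inE => hx ->.
  by rewrite inE ltnNge; have := Hn x; rewrite hx /=.
have prop : B1 \proper A1.
  apply/properP; split.
    by apply/subsetP => y; rewrite !inE => /ltnW.
  by exists k; rewrite !inE ?leqnn ?ltnn.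
have := subset_leq_card sub; rewrite card_imset; last exact: perm_inj.
by rewrite leqNgt proper_card.
Qed.

Variables d N : nat.
Definition sv (s : Idx d N) (i : 'I_d) : nat := val (val s i).

Lemma sv_incr (s : Idx d N) (i j : 'I_d) : (i < j)%N -> (sv s i < sv s j)%N.
Proof.
move=> hij; case: s => f hf; rewrite /sv /=.
by move: hf => /forallP /(_ i) /forallP /(_ j) /implyP; apply.
Qed.

Lemma sv_mono (s : Idx d N) (i j : 'I_d) : (i <= j)%N -> (sv s i <= sv s j)%N.
Proof.
rewrite leq_eqVlt => /orP [/eqP h|h]; last by apply: ltnW; apply: sv_incr.
by have -> : i = j by apply: val_inj.
Qed.

Lemma idx_eq (s r : Idx d N) : (forall i, sv s i = sv r i) -> s = r.
Proof.
by move=> H; apply: val_inj; apply/ffunP => i; apply: val_inj; apply: H.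
Qed.

Lemma idx_img (s r : Idx d N) : (forall i, exists l, sv s i = sv r l) -> s = r.
Proof.
move=> /fin_all_exists [phi Hphi].
have phi_incr (i j : 'I_d) : (i < j)%N -> (phi i < phi j)%N.
  move=> hij; have := sv_incr s hij; rewrite !Hphi => h.
  rewrite ltnNge; apply/negP => hle; have := sv_mono r hle; lia.
have low : forall n (i : 'I_d), (i : nat) = n -> (n <= phi i)%N.
  elim=> [//|n IH] i hi.
  have hn : (n < d)%N by have := ltn_ord i; lia.
  have := IH (Ordinal hn) erefl; have := phi_incr (Ordinal hn) i.
  rewrite hi /= ltnSn => /(_ isT); lia.
have up : forall m (i : 'I_d), ((i : nat) + m = d.-1)%N -> (phi i <= i)%N.
  elim=> [|m IH] i hi.
    have := ltn_ord (phi i); lia.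
  have hn : (i.+1 < d)%N by have := ltn_ord i; lia.
  have := IH (Ordinal hn) ltac:(rewrite /=; lia).
  have := phi_incr i (Ordinal hn); rewrite /= ltnSn => /(_ isT); lia.
apply: idx_eq => i; rewrite Hphi; congr (sv r _); apply: val_inj; apply/eqP.
rewrite eqn_leq; apply/andP; split.
  by apply: (up (d.-1 - i)%N); have := ltn_ord i; lia.
exact: (low i).
Qed.

Lemma det_subm_diag (t : 'I_N -> F) (s r : Idx d N) :
  \det (subm (diag_mx (\row_i t i)) s r) =
  if s == r then \prod_i t (val s i) else 0.
Proof.
case: eqP => [<-|neq].
  rewrite (_ : subm _ s s = diag_mx (\row_i t (val s i))) ?det_diag.
    by apply: eq_bigr => i _; rewrite mxE.
  apply/matrixP => i j; rewrite !mxE.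
  case: (eqVneq i j) => [->|hij]; first by rewrite !eqxx.
  suff -> : (val s i == val s j) = false by [].
  apply/negbTE; apply: contra hij => /eqP h; apply/eqP.
  have : sv s i = sv s j by rewrite /sv h.
  case: (ltngtP i j) => [/(sv_incr s)|/(sv_incr s)|/val_inj //]; lia.
have [i Hi] : exists i, forall l, sv s i != sv r l.
  case: (boolP [exists i, [forall l, sv s i != sv r l]]).
    by case/existsP => i /forallP Hi; exists i.
  move/existsPn => H; exfalso; apply: neq; apply: idx_img => i.
  have := H i; rewrite negb_forall => /existsP [l]; rewrite negbK => /eqP e.
  by exists l.
rewrite /determinant; apply: big1 => sg _.
apply/eqP; rewrite mulf_eq0; apply/orP; right; apply/prodf_eq0; exists i => //.
rewrite !mxE; suff -> : (val s i == val r (sg i)) = false by [].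
by apply/negbTE; apply: contra (Hi (sg i)) => /eqP h; rewrite /sv h.
Qed.

Lemma wedge_ebasis (g : 'M[F]_N) (w s : Idx d N) :
  wedge_act g (ebasis F w) s = \det (subm g s w).
Proof.
rewrite /wedge_act (bigD1 w) //= /ebasis eqxx mulr1 big1 ?addr0 //.
by move=> r /negbTE ->; rewrite mulr0.
Qed.

Lemma wedge_diag (t : 'I_N -> F) (x : Idx d N -> F) s :
  wedge_act (diag_mx (\row_i t i)) x s = (\prod_i t (val s i)) * x s.
Proof.
rewrite /wedge_act (bigD1 s) //= big1 ?addr0.
  by rewrite det_subm_diag eqxx.
by move=> r /negbTE hr; rewrite det_subm_diag eq_sym hr mul0r.
Qed.

Lemma det_subm_diagmul (t : 'I_N -> F) (b : 'M[F]_N) (s r : Idx d N) :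
  \det (subm (diag_mx (\row_i t i) *m b) s r) = (\prod_i t (val s i)) * \det (subm b s r).
Proof.
rewrite (_ : subm _ s r = diag_mx (\row_i t (val s i)) *m subm b s r).
  by rewrite det_mulmx det_diag; congr (_ * _); apply: eq_bigr => i _; rewrite mxE.
by rewrite !mul_diag_mx; apply/matrixP => i j; rewrite !mxE.
Qed.

End DetLemmas.


Ltac ifs := repeat (case: ifP => ?).

Section Comb.
Variable F : fieldType.
Variables (d' N p f : nat) (w : Idx d'.+1 N).
Hypotheses (hp : (p <= d')%N) (hdf : (d'.+1 < f)%N) (hfN : (f <= N)%N).
Hypothesis hw : forall i : 'I_d'.+1,
  sv w i = if (i < p)%N then (i : nat) else if (i < d')%N then i.+1 else f.-1.

Definition gseq (a j i : nat) : nat := if (i < d')%N then (if (i < a)%N then i else i.+1) else j.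

Definition condaj (a j : nat) := [&& (a <= d')%N, (j < N)%N, (d' <= j)%N & (a == d') || (d' < j)%N].

Definition sel (a j : nat) : Idx d'.+1 N :=
  odflt w [pick s : Idx d'.+1 N | [forall i, sv s i == gseq a j i]].

Lemma sel_ok a j : condaj a j -> forall i, sv (sel a j) i = gseq a j i.
Proof.
case/and4P => ha hj hdj haj.
rewrite /sel; case: pickP => [s|H].
  by move=> /forallP H i; apply/eqP; apply: H.
exfalso.
have hb : forall i : 'I_d'.+1, (gseq a j i < N)%N.
  move=> i; rewrite /gseq; have := ltn_ord i; ifs; lia.
pose fg := [ffun i => Ordinal (hb i)].
have hi : incrb fg.
  apply/forallP => i; apply/forallP => k; apply/implyP => hik; rewrite !ffunE /= /gseq.
  have := ltn_ord k; move: haj; ifs; lia.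
have := H (exist _ fg hi); move/negP; apply; apply/forallP => i.
by rewrite /sv /= ffunE.
Qed.

Lemma sel_eq a j s : condaj a j -> (forall i, sv s i = gseq a j i) -> s = sel a j.
Proof. by move=> c H; apply: idx_eq => i; rewrite H sel_ok. Qed.

Definition goodp (a j : nat) := ((p <= a <= d')%N && (d' < j < f)%N) || ((a == d') && (j == d')).

Lemma good_cond a j : goodp a j -> condaj a j.
Proof. rewrite /goodp /condaj => h; lia. Qed.

Definition allowed (s : Idx d'.+1 N) := [forall i, (sv s i <= sv w i)%N].

Lemma allowed_sel a j : goodp a j -> allowed (sel a j).
Proof.
move=> gd; apply/forallP => i; rewrite sel_ok ?good_cond // hw /gseq.
have := ltn_ord i; move: gd; rewrite /goodp.
ifs; lia.
Qed.

Lemma sv_ge (s : Idx d'.+1 N) (i : 'I_d'.+1) : (i <= sv s i)%N.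
Proof.
have H : forall n (i : 'I_d'.+1), (i : nat) = n -> (n <= sv s i)%N.
  elim=> [//|n IH] k hk.
  have hn : (n < d'.+1)%N by have := ltn_ord k; lia.
  have := IH (Ordinal hn) erefl; have := sv_incr s (i:=Ordinal hn) (j:=k).
  rewrite hk /= ltnSn => /(_ isT); lia.
exact: H.
Qed.

Lemma sv_gap (s : Idx d'.+1 N) (i k : 'I_d'.+1) : (i <= k)%N -> (sv s i + (k - i) <= sv s k)%N.
Proof.
have H : forall m (i k : 'I_d'.+1), (k - i)%N = m -> (i <= k)%N -> (sv s i + (k - i) <= sv s k)%N.
  elim=> [|m IH] i' k' hm hik.
    have -> : i' = k' by apply: ord_inj; lia.
    by rewrite subnn addn0.
  have hn : (i'.+1 < d'.+1)%N by have := ltn_ord k'; lia.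
  have := IH (Ordinal hn) k' ltac:(rewrite /=; lia) ltac:(rewrite /=; lia).
  have := sv_incr s (i:=i') (j:=Ordinal hn); rewrite /= ltnSn => /(_ isT); lia.
by move=> h; apply: H.
Qed.

Lemma allowed_char s : allowed s -> exists a j, goodp a j /\ s = sel a j.
Proof.
move=> /forallP al.
set j := sv s ord_max.
have hj : (j <= f.-1)%N by have := al ord_max; rewrite hw /= ltnn; ifs; lia.
have hjd : (d' <= j)%N by have := sv_ge s ord_max.
have bnd : forall i : 'I_d'.+1, (i < d')%N -> (i <= sv s i <= i.+1)%N.
  by move=> i hi; have := al i; have := sv_ge s i; rewrite hw; ifs; lia.
case: (ltngtP d' j) => hj'; last first.
- exists d', d'; split; first by rewrite /goodp !eqxx orbT.
  apply: sel_eq; first by rewrite /condaj eqxx; have := ltn_ord (ord_max : 'I_d'.+1); lia.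
  move=> i; rewrite /gseq; have := sv_ge s i; have := @sv_gap s i ord_max (leq_ord i).
  rewrite -/j -hj' /=; have := ltn_ord i; ifs; lia.
- lia.
pose sn n := sv s (inord n).
have snE : forall i : 'I_d'.+1, sn i = sv s i by move=> i; rewrite /sn inord_val.
pose P n := (n == d') || ((n < d')%N && (sn n != n)).
have exP : exists n, P n by exists d'; rewrite /P eqxx.
case: (ex_minnP exP) => a Pa amin.
have ad : (a <= d')%N by apply: amin; rewrite /P eqxx.
have below : forall n, (n < a)%N -> sn n = n.
  move=> n hn; apply/eqP; apply: contraTT hn => hne; rewrite -leqNgt.
  case: (ltnP n d') => h; last lia.
  by apply: amin; rewrite /P hne h orbT.
have ap : (p <= a)%N.
  rewrite leqNgt; apply/negP => hap.
  move: Pa; rewrite /P; have -> : (a == d') = false by apply/negbTE; lia.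
  have ha : (a < d'.+1)%N by lia.
  have := al (Ordinal ha); have := sv_ge s (Ordinal ha); rewrite hw /= hap.
  have -> : sn a = sv s (Ordinal ha) by rewrite /sn; congr (sv s _); apply: val_inj; rewrite /= inordK.
  by move=> h1 h2; rewrite /= (_ : sv s _ = a) ?eqxx ?andbF //; lia.
have above : forall m n, (n - a)%N = m -> (a <= n)%N -> (n < d')%N -> sn n = n.+1.
  elim=> [|m IH] n hm han hnd.
    have -> : n = a by lia.
    move: Pa; rewrite /P; have -> : (a == d') = false by apply/negbTE; lia.
    have ha : (a < d'.+1)%N by lia.
    have -> : sn a = sv s (Ordinal ha) by rewrite /sn; congr (sv s _); apply: val_inj; rewrite /= inordK.
    by have := bnd (Ordinal ha) ltac:(rewrite /=; lia); rewrite /=; move=> h1 h2; lia.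
  have hn1 : (n.-1 < d'.+1)%N by lia.
  have hn2 : (n < d'.+1)%N by lia.
  have := IH n.-1 ltac:(lia) ltac:(lia) ltac:(lia).
  have -> : sn n.-1 = sv s (Ordinal hn1) by rewrite /sn; congr (sv s _); apply: val_inj; rewrite /= inordK.
  have -> : sn n = sv s (Ordinal hn2) by rewrite /sn; congr (sv s _); apply: val_inj; rewrite /= inordK.
  have := sv_incr s (i:=Ordinal hn1) (j:=Ordinal hn2) ltac:(rewrite /=; lia).
  have := bnd (Ordinal hn2) ltac:(rewrite /=; lia); rewrite /=; lia.
exists a, j; split.
  by rewrite /goodp; apply/orP; left; have := ltn_ord (ord_max : 'I_d'.+1); lia.
apply: sel_eq; first by rewrite /condaj; lia.
move=> i; rewrite /gseq -snE; case: ifP => hi; last first.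
  have -> : i = ord_max by apply: ord_inj; have := ltn_ord i; rewrite /=; lia.
  by rewrite snE.
case: ifP => hia; first exact: below.
by apply: (above (i - a)%N) => //; lia.
Qed.

Lemma notallowed_det (b : 'M[F]_N) s : upper_tri b -> ~~ allowed s -> \det (subm b s w) = 0.
Proof.
move=> ub; rewrite /allowed negb_forall => /existsP [k]; rewrite -ltnNge => hk.
apply: (det_block0 (k := k)) => i l hki hlk; rewrite mxE; apply: ub.
change (sv w l < sv s i)%N; move: hk; have := sv_mono w hlk; have := sv_mono s hki; lia.
Qed.

Definition minor (a : nat) (b : 'M[F]_N) :=
  \det (row' ord_max (col' ord_max (subm b (sel a d'.+1) w))).

Lemma det_factor (b : 'M[F]_N) a j : upper_tri b -> goodp a j -> (d' < j)%N ->
  \det (subm b (sel a j) w) = b (val (sel a j) ord_max) (val w ord_max) * minor a b.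
Proof.
move=> ub gd hj; have cd := good_cond gd.
have cd' : condaj a d'.+1.
  by move: cd; rewrite /condaj; have := leq_trans hdf hfN; lia.
rewrite (expand_det_row _ ord_max) (bigD1 ord_max) //= big1 ?addr0.
  rewrite mxE /cofactor -signr_odd oddD addbb expr0 mul1r /minor; congr (_ * \det _).
  apply/matrixP => i l; rewrite !mxE; congr (b _ _); apply: ord_inj.
  change (sv (sel a j) (lift ord_max i) = sv (sel a d'.+1) (lift ord_max i)).
  rewrite !sel_ok //= /gseq /bump; have hi : (i < d')%N := ltn_ord i.
  by rewrite (_ : (d' <= i)%N = false) ?add0n ?hi //; apply/negbTE; rewrite -ltnNge.
move=> l hl; rewrite mxE ub ?mul0r //.
change (sv w l < sv (sel a j) ord_max)%N.
rewrite hw sel_ok // /gseq /=; have := ltn_ord l.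
have : (l : nat) <> d' by move=> e; apply: (negP hl); apply/eqP/ord_inj.
ifs; lia.
Qed.

Definition bw (a j : nat) : 'M[F]_N := \matrix_(r, c)
  (if [|| (r == c :> nat), ((p <= r)%N && (r < a)%N && (c == r.+1 :> nat)) | ((r == j :> nat) && (c == f.-1 :> nat))]
   then 1 else 0).

Lemma bw_upper a j : (j < f)%N -> upper_tri (bw a j).
Proof.
move=> hj i k hki; rewrite mxE; case: ifP => // h; exfalso; move: h; lia.
Qed.

Lemma bw_det a j : goodp a j -> \det (subm (bw a j) (sel a j) w) = 1.
Proof.
move=> gd; have cd := good_cond gd.
rewrite det_trig.
  apply: big1 => i _; rewrite !mxE.
  change ((if [|| sv (sel a j) i == sv w i, (p <= sv (sel a j) i)%N && (sv (sel a j) i < a)%N && (sv w i == (sv (sel a j) i).+1) | (sv (sel a j) i == j) && (sv w i == f.-1)] then 1 else 0) = 1 :> F).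
  rewrite sel_ok // hw /gseq; move: gd; rewrite /goodp => gd; have hi := ltn_ord i.
  case: (ltnP i d') => ?; case: (ltnP i a) => ?; case: (ltnP i p) => ? /=;
  case: ifP => // h; exfalso; move: h; rewrite ?eqxx ?orbT ?orTb //=; lia.
apply/forallP => i; apply/forallP => l; apply/implyP => hil; apply/eqP; rewrite !mxE.
change ((if [|| sv (sel a j) i == sv w l, (p <= sv (sel a j) i)%N && (sv (sel a j) i < a)%N && (sv w l == (sv (sel a j) i).+1) | (sv (sel a j) i == j) && (sv w l == f.-1)] then 1 else 0) = 0 :> F).
rewrite !sel_ok // !hw /gseq; move: gd; rewrite /goodp => gd; have hl := ltn_ord l; have hi := ltn_ord i.
case: (ltnP i d') => ?; case: (ltnP i a) => ?; case: (ltnP l p) => ?; case: (ltnP l d') => ? /=;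
case: ifP => // h; exfalso; move: h; rewrite ?eqxx ?orbT ?orTb //=; lia.
Qed.

End Comb.


Section Poly.
Variable F : fieldType.
Variable K : finType.

Lemma prod_mono (y : K -> F) s : \prod_k y k ^+ (k == s) = y s.
Proof.
rewrite (bigD1 s) //= eqxx expr1 big1 ?mulr1 // => k /negbTE ->; exact: expr0.
Qed.

Definition mono1 (s : K) : mpoly F K := [:: (1, [ffun k => nat_of_bool (k == s)])].
Lemma meval_mono1 s y : meval (mono1 s) y = y s.
Proof.
rewrite /meval big_cons big_nil addr0 mul1r /=.
by rewrite -(prod_mono y s); apply: eq_bigr => k _; rewrite ffunE.
Qed.
Lemma homog_mono1 s : homog (mono1 s).
Proof.
exists 1%N => t; rewrite inE => /eqP -> /=.
rewrite (bigD1 s) //= ffunE eqxx big1 // => k /negbTE hk; by rewrite ffunE hk.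
Qed.

Definition rank2 (s1 s2 s3 s4 : K) : mpoly F K :=
  [:: (1, [ffun k => nat_of_bool (k == s1) + nat_of_bool (k == s2)]%N);
      (-1, [ffun k => nat_of_bool (k == s3) + nat_of_bool (k == s4)]%N)].

Lemma meval_rank2 s1 s2 s3 s4 y :
  meval (rank2 s1 s2 s3 s4) y = y s1 * y s2 - y s3 * y s4.
Proof.
rewrite /meval !big_cons big_nil addr0 /= mul1r mulN1r.
congr (_ - _).
  rewrite -(prod_mono y s1) -(prod_mono y s2) -big_split /=.
  by apply: eq_bigr => k _; rewrite ffunE exprD.
rewrite -(prod_mono y s3) -(prod_mono y s4) -big_split /=.
by apply: eq_bigr => k _; rewrite ffunE exprD.
Qed.

Lemma sum_ind (s : K) : (\sum_k nat_of_bool (k == s) = 1)%N.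
Proof. by rewrite (bigD1 s) //= eqxx big1 // => k /negbTE ->. Qed.

Lemma homog_rank2 s1 s2 s3 s4 : homog (rank2 s1 s2 s3 s4).
Proof.
exists 2%N => t; rewrite !inE => /orP [] /eqP -> /=;
  under eq_bigr do rewrite ffunE; by rewrite big_split /= !sum_ind.
Qed.

Definition Qf (A : pred K) (y : K -> F) := \prod_(s | A s) y s.
Definition Qp (A : pred K) : mpoly F K := [:: (1, [ffun s => nat_of_bool (A s)])].

Lemma meval_Qp A y : meval (Qp A) y = Qf A y.
Proof.
rewrite /meval big_cons big_nil addr0 mul1r /Qf [RHS]big_mkcond /=.
by apply: eq_bigr => k _; rewrite ffunE; case: (A k).
Qed.

Lemma homog_Qp A : homog (Qp A).
Proof. by exists (\sum_k nat_of_bool (A k))%N => t; rewrite inE => /eqP -> /=; under eq_bigr do rewrite ffunE. Qed.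

Lemma Qf_nz A y s : Qf A y != 0 -> A s -> y s != 0.
Proof. by move=> H As; apply: contra H => /eqP ys; apply/prodf_eq0; exists s => //; rewrite ys. Qed.

End Poly.

Ltac nzt := repeat first [apply: mulf_neq0 | apply: invr_neq0].

Section Main.
Variable F : fieldType.
Hypothesis charF0 : [pchar F] =i pred0.
Variables (d' N p f : nat) (w : Idx d'.+1 N).
Hypotheses (hp : (p <= d')%N) (hdf : (d'.+1 < f)%N) (hfN : (f <= N)%N).
Hypothesis hw : forall i : 'I_d'.+1,
  sv w i = if (i < p)%N then (i : nat) else if (i < d')%N then i.+1 else f.-1.

Local Notation Idx := (Idx d'.+1 N).
Local Notation sel := (sel w).
Local Notation allowed := (allowed w).
Let sel_ok' := @sel_ok d' N p f w hp hdf hfN.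
Let good_cond' := @good_cond d' N p f hp hdf hfN.
Let det_factor' := @det_factor F d' N p f w hp hdf hfN hw.
Let allowed_char' := @allowed_char d' N p f w hp hdf hfN hw.
Let bw_det' := @bw_det F d' N p f w hp hdf hfN hw.
Let bw_upper' := @bw_upper F d' N p f hp hdf hfN.
Let allowed_sel' := @allowed_sel d' N p f w hp hdf hfN hw.
Let notallowed' := @notallowed_det F d' N p f w hp hdf hfN.

Definition Vt := option ('I_N * 'I_N).
Definition bm (z : Vt -> F) : 'M[F]_N := \matrix_(i, j) if (i <= j)%N then z (Some (i, j)) else 0.
Definition yv (z : Vt -> F) (s : Idx) : F := z None * \det (subm (bm z) s w).

Lemma det_upper n (g : 'M[F]_n) : upper_tri g -> \det g = \prod_i g i i.
Proof.
move=> ug; rewrite -det_tr det_trig.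
  by apply: eq_bigr => i _; rewrite mxE.
apply/forallP => i; apply/forallP => j; apply/implyP => hij; apply/eqP.
by rewrite mxE ug.
Qed.

Lemma bm_upper z : upper_tri (bm z).
Proof. by move=> i j hij; rewrite mxE leqNgt hij. Qed.

Lemma bm_unit z : (forall i, z (Some (i, i)) != 0) -> bm z \in unitmx.
Proof.
move=> H; rewrite unitmxE unitfE det_upper; last exact: bm_upper.
by apply/prodf_neq0 => i _; rewrite mxE leqnn; apply: H.
Qed.

Lemma yv_borbit z : z None != 0 -> (forall i, z (Some (i, i)) != 0) -> Borbit w (yv z).
Proof.
move=> h0 h1; exists (bm z), (z None); split => //; first exact: bm_upper.
  exact: bm_unit.
by move=> s; rewrite wedge_ebasis.
Qed.

Lemma borbit_yv (y : Idx -> F) : Borbit w y -> exists z, [/\ forall s, y s = yv z s, z None != 0 &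
  forall i, z (Some (i, i)) != 0].
Proof.
case=> g [c [ug gu c0 Hy]].
pose z (v : Vt) := if v is Some ij then g ij.1 ij.2 else c.
have bmz : bm z = g.
  by apply/matrixP => i j; rewrite mxE /=; case: leqP => // h; rewrite ug.
exists z; split => //.
  by move=> s; rewrite Hy /yv bmz wedge_ebasis.
move=> i /=; move: gu; rewrite unitmxE unitfE det_upper //.
by move/prodf_neq0/(_ i isT).
Qed.

Lemma borbit_nonzero (y : Idx -> F) : Borbit w y -> nonzero y.
Proof.
case=> g [c [ug gu c0 Hy]]; exists w; rewrite Hy wedge_ebasis; apply: mulf_neq0 => //.
rewrite det_upper.
  apply/prodf_neq0 => i _; rewrite mxE.
  by move: gu; rewrite unitmxE unitfE det_upper // => /prodf_neq0/(_ (val w i) isT).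
move=> i j hij; rewrite mxE ug //.
by change (sv w j < sv w i)%N; apply: sv_incr.
Qed.

Lemma borbit_sch (y : Idx -> F) : Borbit w y -> Schubert w y.
Proof. by move=> By; split; [exact: borbit_nonzero | move=> q _ /(_ y By)]. Qed.

Lemma sch_zero (y : Idx -> F) s : Schubert w y -> ~~ allowed s -> y s = 0.
Proof.
move=> [_ Hy] ns; rewrite -meval_mono1; apply: Hy; first exact: homog_mono1.
move=> z; rewrite meval_mono1 => -[g [c [ug _ _ ->]]].
by rewrite wedge_ebasis (notallowed_det hp hdf hfN) ?mulr0.
Qed.


Lemma sch_rank (y : Idx -> F) a a' j j' : (p <= a <= d')%N -> (p <= a' <= d')%N ->
  (d' < j < f)%N -> (d' < j' < f)%N -> Schubert w y ->
  y (sel a j) * y (sel a' j') = y (sel a j') * y (sel a' j).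
Proof.
move=> ha ha' hj hj' [_ Hy]; apply/eqP; rewrite -subr_eq0 -meval_rank2; apply/eqP.
apply: Hy; first exact: homog_rank2.
move=> z; rewrite meval_rank2 => -[g [c [ug _ _ Hz]]]; rewrite !Hz !wedge_ebasis.
have gd a0 j0 : (p <= a0 <= d')%N -> (d' < j0 < f)%N -> goodp d' p f a0 j0.
  by rewrite /goodp => h1 h2; rewrite h1 h2.
rewrite !det_factor' ?gd //; try lia.
have e : forall a0 a1 j0, (p <= a0 <= d')%N -> (p <= a1 <= d')%N -> (d' < j0 < f)%N ->
    val (sel a0 j0) ord_max = val (sel a1 j0) ord_max.
  move=> a0 a1 j0 h0 h1 h2; apply: ord_inj.
  change (sv (sel a0 j0) ord_max = sv (sel a1 j0) ord_max).
  by rewrite !sel_ok' ?good_cond' ?gd // /gseq ltnn.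
rewrite (e a' a j') // (e a' a j) //; ring.
Qed.

Lemma goodE : goodp d' p f d' d'.
Proof. by rewrite /goodp !eqxx orbT. Qed.

Lemma goodG a j : (p <= a <= d')%N -> (d' < j < f)%N -> goodp d' p f a j.
Proof. by rewrite /goodp => -> ->. Qed.

Lemma prod_E (tau : nat -> F) :
  \prod_(i < d'.+1) tau (sv (sel d' d') i) = \prod_(k < d'.+1) tau k.
Proof.
apply: eq_bigr => i _; rewrite sel_ok' ?good_cond' ?goodE // /gseq.
by have := ltn_ord i; case: ifP => h1; [rewrite h1|] => h2; congr tau; lia.
Qed.

Lemma prod_shift (tau : nat -> F) a : forall n, (a <= n)%N ->
  \prod_(0 <= i < n) tau (if (i < a)%N then i else i.+1) * tau a =
  \prod_(0 <= i < n) tau i * tau n.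
Proof.
have base : \prod_(0 <= i < a) tau (if (i < a)%N then i else i.+1) = \prod_(0 <= i < a) tau i.
  by apply: eq_big_nat => i /andP [_ ->].
elim=> [|n IH] han.
  have a0 : a = 0%N by lia.
  by rewrite !big_geq // a0.
case: (eqVneq a n.+1) => [ea|na].
  by rewrite -ea base.
have han' : (a <= n)%N by lia.
rewrite !big_nat_recr //= (_ : (n < a)%N = false); last lia.
by rewrite mulrAC IH // -mulrA [tau _ * tau _]mulrC mulrA.

Qed.

Lemma prod_gen (tau : nat -> F) a j : (p <= a <= d')%N -> (d' < j < f)%N ->
  (\prod_(i < d'.+1) tau (sv (sel a j) i)) * tau a = (\prod_(k < d'.+1) tau k) * tau j.
Proof.
move=> ha hj; have cd := good_cond' (goodG ha hj).
rewrite !big_ord_recr /= sel_ok' // /gseq /= ltnn.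
have -> : \prod_(i < d') tau (sv (sel a j) (widen_ord (leqnSn d') i)) =
          \prod_(i < d') tau (if (i < a)%N then (i : nat) else i.+1).
  by apply: eq_bigr => i _; rewrite sel_ok' //= /gseq ltn_ord.
rewrite mulrAC -(big_mkord xpredT (fun i => tau (if (i < a)%N then i else i.+1))).
rewrite (prod_shift tau (n := d')); last lia.
by rewrite big_mkord mulrAC.
Qed.

Lemma open_core (x y : Idx -> F) : Schubert w x -> Qf allowed x != 0 ->
  Schubert w y -> Qf allowed y != 0 -> Torbit x y.
Proof.
move=> Sx Qx Sy Qy.
pose dd := d'.+1.
pose X a j := x (sel a j). pose Y a j := y (sel a j).
have nzX a j : goodp d' p f a j -> X a j != 0 by move=> h; apply: (Qf_nz Qx); apply: allowed_sel'.
have nzY a j : goodp d' p f a j -> Y a j != 0 by move=> h; apply: (Qf_nz Qy); apply: allowed_sel'.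
have gE := goodE.
pose ka := Y d' d' / X d' d'.
have kanz : ka != 0 by nzt; rewrite ?nzX ?nzY.
pose tau n := if (n < p)%N then 1 else if (n < dd)%N then ka * X n dd / Y n dd
  else if (n < f)%N then Y p n * X p dd / (X p n * Y p dd) else 1.
have gpd : goodp d' p f p dd by apply: goodG; lia.
have taunz n : tau n != 0.
  rewrite /tau; case: ifP => h1; first exact: oner_neq0.
  case: ifP => h2.
    have g : goodp d' p f n dd by apply: goodG; lia.
    by nzt; rewrite ?nzX ?nzY.
  case: ifP => h3; last exact: oner_neq0.
  have g : goodp d' p f p n by apply: goodG; lia.
  by nzt; rewrite ?nzX ?nzY.
pose P := \prod_(k < dd) tau k.
have Pnz : P != 0 by apply/prodf_neq0 => k _.
exists (fun i => tau i), (ka / P); split => //.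
  by nzt; rewrite ?nzX ?nzY ?Pnz.
move=> s; rewrite wedge_diag.
change (y s = ka / P * (\prod_i tau (sv s i) * x s)).
case: (boolP (allowed s)) => als; last first.
  by rewrite !(sch_zero (y := y)) ?(sch_zero (y := x)) // !mulr0.
have [a [j [gd ->]]] := allowed_char' als.
move: (gd); rewrite /goodp => /orP [/andP [ha hj] | /andP [/eqP -> /eqP ->]]; last first.
  rewrite prod_E; change (Y d' d' = ka / P * (P * X d' d')).
  by rewrite /ka; field; rewrite ?nzX ?Pnz.
have e := prod_gen tau ha hj.
have eP : \prod_i tau (sv (sel a j) i) = P * tau j / tau a by rewrite -e mulfK.
rewrite eP; change (Y a j = ka / P * (P * tau j / tau a * X a j)).
have ta : tau a = ka * X a dd / Y a dd.
  rewrite /tau; have -> : (a < p)%N = false by lia.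
  by have -> : (a < dd)%N = true by lia.
have tj : tau j = Y p j * X p dd / (X p j * Y p dd).
  rewrite /tau; have -> : (j < p)%N = false by lia.
  have -> : (j < dd)%N = false by lia.
  by have -> : (j < f)%N = true by lia.
have ga : goodp d' p f a dd by apply: goodG; lia.
have gj : goodp d' p f p j by apply: goodG; lia.
have hy := sch_rank (a:=a) (a':=p) (j:=j) (j':=dd) ha ltac:(lia) hj ltac:(lia) Sy.
have hx := sch_rank (a:=a) (a':=p) (j:=j) (j':=dd) ha ltac:(lia) hj ltac:(lia) Sx.
have eY : Y a j = Y a dd * Y p j / Y p dd by rewrite -hy mulfK ?nzY.
have eX : X a j = X a dd * X p j / X p dd by rewrite -hx mulfK ?nzX.
rewrite eY eX ta tj /ka.
by field; rewrite ?nzX ?nzY ?Pnz ?taunz.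
Qed.

Lemma pf_bm i j : pf (fun z : Vt -> F => bm z i j).
Proof.
case h: (i <= j)%N.
  by apply: (pfE (f := fun z : Vt -> F => z (Some (i, j)))) => [z|]; [rewrite mxE h | exact: pfX].
by apply: (pfE (f := fun _ : Vt -> F => 0)) => [z|]; [rewrite mxE h | exact: pfC].
Qed.

Lemma pf_yv s : pf (fun z : Vt -> F => yv z s).
Proof.
apply: pfM; first exact: pfX.
apply: (pfE (f := fun z => \sum_(sg : 'S_d'.+1) (-1) ^+ sg * \prod_i subm (bm z) s w i (sg i))) => [z|].
  by [].
apply: pf_sum => sg; apply: pfM; first exact: pfC.
apply: pf_prod => i.
apply: (pfE (f := fun z => bm z (val s i) (val w (sg i)))) => [z|]; first by rewrite /subm mxE.
exact: pf_bm.
Qed.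

Definition Phi (z : Vt -> F) := Qf allowed (yv z) * (z None * \prod_i z (Some (i, i))).

Lemma pf_Phi : pf Phi.
Proof.
apply: pfM.
  apply: (pfE (f := fun z => \prod_(s <- index_enum Idx) (if allowed s then yv z s else 1))) => [z|].
    by rewrite /Qf [RHS]big_mkcond.
  apply: pf_prod => s; case: (allowed s); [exact: pf_yv | exact: pfC].
apply: pfM; first exact: pfX.
by apply: pf_prod => i; exact: pfX.
Qed.

Lemma Phi_dec z : Phi z != 0 ->
  [/\ Qf allowed (yv z) != 0, z None != 0 & forall i, z (Some (i, i)) != 0].
Proof.
rewrite /Phi !mulf_eq0 !negb_or => /and3P [h1 h2 h3]; split => // i.
by move: h3 => /prodf_neq0 /(_ i isT).
Qed.

Lemma Phi_nz : exists z, Phi z != 0.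
Proof.
apply: (pf_mul_nz charF0).
- apply: (pfE (f := fun z => \prod_(s <- index_enum Idx) (if allowed s then yv z s else 1))) => [z|].
    by rewrite /Qf [RHS]big_mkcond.
  apply: pf_prod => s; case: (allowed s); [exact: pf_yv | exact: pfC].
- apply: pfM; first exact: pfX.
  by apply: pf_prod => i; exact: pfX.
- have hmem : forall s, s \in [seq s <- index_enum Idx | allowed s] -> exists z : Vt -> F, yv z s != 0.
    move=> s; rewrite mem_filter => /andP [als _].
    have [a [j [gd ->]]] := allowed_char' als.
    pose zw (v : Vt) := if v is Some ij then bw F N p f a j ij.1 ij.2 else 1.
    have hjf : (j < f)%N by move: gd; rewrite /goodp; lia.
    have bmz : bm zw = bw F N p f a j.
      by apply/matrixP => i k; rewrite mxE /=; case: leqP => // h; rewrite bw_upper'.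
    by exists zw; rewrite /yv bmz bw_det' // mulr1 oner_neq0.
  have [z hz] := @pf_prod_nz F charF0 Vt Idx [seq s <- index_enum Idx | allowed s] (fun s z => yv z s)
     pf_yv hmem.
  by exists z; rewrite /Qf -big_filter.
- exists (fun _ => 1); rewrite mul1r; apply/prodf_neq0 => i _; exact: oner_neq0.
Qed.

Lemma main_sec : exists x : Idx -> F,
  [/\ Schubert w x, open_in (Schubert w) (Torbit x) & dense_in (Schubert w) (Torbit x)].
Proof.
have [z0 Hz0] := Phi_nz.
have [Qx n0 n1] := Phi_dec Hz0.
pose x := yv z0.
have Bx : Borbit w x by apply: yv_borbit.
have Sx := borbit_sch Bx.
have torb y : Torbit x y -> Schubert w y /\ Qf allowed y != 0.
  case=> t [c [tnz c0 Hy]].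
  have tnz' : \prod_i (\row_i t i) 0 i != 0 by apply/prodf_neq0 => i _; rewrite mxE.
  have By : Borbit w y.
    exists (diag_mx (\row_i t i) *m bm z0), (c * z0 None); split.
    - by move=> i j hij; rewrite mul_diag_mx mxE bm_upper // mulr0.
    - rewrite unitmx_mul bm_unit // andbT unitmxE unitfE det_diag //.
    - by nzt.
    - move=> s; rewrite Hy wedge_diag wedge_ebasis det_subm_diagmul /x /yv; ring.
  split; first exact: borbit_sch.
  apply/prodf_neq0 => s als; rewrite Hy wedge_diag; nzt => //.
    by apply/prodf_neq0 => i _.
  by move: (Qf_nz Qx als); rewrite /yv mulf_eq0 negb_or => /andP [_ ->].
exists x; split => //.
- exists (fun q => q = Qp F allowed); split; first by move=> q ->; exact: homog_Qp.
  move=> y; split.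
    move=> Ty; have [Sy Qy] := torb y Ty; split => // -[_ H].
    by move: (H _ erefl); rewrite meval_Qp => /eqP; rewrite (negbTE Qy).
  case=> Sy npz; apply: open_core => //.
  apply/eqP => Q0; apply: npz; split; first exact: Sy.1.
  by move=> q ->; rewrite meval_Qp.
- move=> y Sy; split; first exact: Sy.1.
  move=> q hq Hq; apply: Sy.2 => // z Bz.
  have [zz [ez _ _]] := borbit_yv Bz.
  have -> : z = yv zz by apply: functional_extensionality.
  have key : forall zz, Phi zz != 0 -> meval q (yv zz) = 0.
    move=> z1 hP; have [Q1 m0 m1] := Phi_dec hP.
    apply: Hq; apply: open_core => //.
    by apply: borbit_sch; apply: yv_borbit.
  case: (eqVneq (meval q (yv zz)) 0) => // hne; exfalso.
  have [z1 hz1] := pf_mul_nz charF0 pf_Phi (pf_meval q pf_yv) (ex_intro _ z0 Hz0) (ex_intro _ zz hne).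
  have hP1 : Phi z1 != 0 by apply: contra hz1 => /eqP ->; rewrite mul0r.
  by move: hz1; rewrite key // mulr0 eqxx.
Qed.

End Main.


Unset Implicit Arguments.
Set Strict Implicit.


Theorem corollary6p2 (F : closedFieldType)
  (charF0 : [pchar F] =i pred0)
  (d N : nat) (hd1 : (1 <= d)%N) (hdN : (d < N)%N) (w : Idx d N) :
  ((exists p f : nat, [/\ (p < d - 1)%N, (d < f)%N, (f <= N)%N &
       forall i : 'I_d, (val w i : nat) =
         if (i < p)%N then (i : nat)
         else if (i < d - 1)%N then (i + 1)%N else (f - 1)%N])
   \/
   (exists f : nat, [/\ (d < f)%N, (f <= N)%N &
       forall i : 'I_d, (val w i : nat) =
         if (i < d - 1)%N then (i : nat) else (f - 1)%N])) ->
  exists x : Idx d N -> F,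
    [/\ Schubert w x,
        open_in (Schubert w) (Torbit x) &
        dense_in (Schubert w) (Torbit x)].
Proof.
case: d hd1 hdN w => [//|d'] _ hdN w.
case=> [[p [f [hp hdf hfN hw]]] | [f [hdf hfN hw]]].
  apply: (main_sec (F := F) charF0 (p := p) (f := f)) => //; first lia.
  move=> i; have := hw i; rewrite !subn1 addn1 /= => e; exact: e.
apply: (main_sec (F := F) charF0 (p := d') (f := f)) => //.
move=> i; have := hw i; rewrite !subn1 /= => e; rewrite /sv; rewrite [LHS]e; by case: ifP.
Qed.
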